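(* Let $G$ be a connected graph containing a cycle. Then the intersection of any (possibly infinite) family of pre-cycle cores of $G$ is again a pre-cycle core of $G$. Consequently, $G$ has a unique minimal pre-cycle core.
   Context: Graphs are simple and unoriented, possibly infinite. A cycle in $G$ is a closed path $(x_0,\dots,x_n=x_0)$ with no repeated vertices except $x_0=x_n$ and no edges $(x_i,x_j)$ of $G$ with $i-j\not\equiv0,\pm1\pmod n$. A pre-cycle core of $G$ is a subset $I\subseteq V(G)$ such that $G|_I$ is connected and contains all cycles of $G$. *)

(* Defs.v *)
From Stdlib Require Import Arith Relations.

Section Graphs.
Variable V : Type.
Variable adj : V -> V -> Prop.

Definition simple_graph : Prop :=
  (forall x y, adj x y -> adj y x) /\ (forall x, ~ adj x x).

(* A cycle (x_0, ..., x_n = x_0): closed path, n >= 3, no repeated vertices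
   except x_0 = x_n, and no chords: an edge x_i x_j (i, j < n) only if
   i - j = 0, 1 or -1 modulo n. *)
Definition is_cycle (x : nat -> V) (n : nat) : Prop :=
  3 <= n /\
  x n = x 0 /\
  (forall i, i < n -> adj (x i) (x (S i))) /\
  (forall i j, i < n -> j < n -> x i = x j -> i = j) /\
  (forall i j, i < n -> j < n -> adj (x i) (x j) ->
     (i + n - j) mod n = 0 \/ (i + n - j) mod n = 1 \/ (i + n - j) mod n = n - 1).

Definition has_cycle : Prop := exists x n, is_cycle x n.

Definition induced_connected (S : V -> Prop) : Prop :=
  forall a b, S a -> S b ->
    clos_refl_trans V (fun u v => S u /\ S v /\ adj u v) a b.

Definition connected : Prop := induced_connected (fun _ => True).

Definition pre_cycle_core (I : V -> Prop) : Prop :=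
  induced_connected I /\
  (forall x n, is_cycle x n -> forall i, i <= n -> I (x i)).

Definition minimal_pre_cycle_core (I : V -> Prop) : Prop :=
  pre_cycle_core I /\
  forall J : V -> Prop, pre_cycle_core J -> (forall v, J v -> I v) -> (forall v, I v -> J v).

End Graphs.

(* Main.v *)
Require Import Defs.
From Stdlib Require Import Arith Relations.
From Stdlib Require Import Lia Classical.

Definition walk (V : Type) (R : V -> V -> Prop) (w : nat -> V) (L : nat) : Prop :=
  forall k, k < L -> R (w k) (w (S k)).

Definition splice (V : Type) (w : nat -> V) (i d : nat) : nat -> V :=
  fun k => if k <=? i then w k else w (k + d).

Lemma splice_walk V R w L i d : walk V R w L -> d <= L -> i <= L - d ->
  (i < L - d -> R (w i) (w (i+1+d))) -> walk V R (splice V w i d) (L - d).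
Proof.
  unfold walk, splice; intros H Hd Hi Hc k Hk.
  destruct (Nat.leb_spec k i); destruct (Nat.leb_spec (S k) i).
  - apply H; lia.
  - assert (k = i) by lia. subst. replace (S i + d) with (i+1+d) by lia. apply Hc; lia.
  - lia.
  - replace (S k + d) with (S (k+d)) by lia. apply H; lia.
Qed.

Lemma splice_range V w i d k : exists k', k' <= k + d /\ splice V w i d k = w k'.
Proof.
  unfold splice. destruct (Nat.leb_spec k i).
  - exists k; split; [lia|reflexivity].
  - exists (k+d); split; [lia|reflexivity].
Qed.

Lemma splice_0 V w i d : splice V w i d 0 = w 0.
Proof. reflexivity. Qed.

Lemma splice_eq_end V w i d L : w i = w (i + d) -> i + d <= L ->
  splice V w i d (L - d) = w L.
Proof.
  intros He Hl. unfold splice. destruct (Nat.leb_spec (L - d) i).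
  - assert (L - d = i) by lia. rewrite H0, He. f_equal; lia.
  - f_equal; lia.
Qed.

Lemma splice_adj_end V w i d L : i + 1 + d <= L ->
  splice V w i d (L - d) = w L.
Proof.
  intros Hl. unfold splice. destruct (Nat.leb_spec (L - d) i).
  - lia.
  - f_equal; lia.
Qed.

Lemma good_cycle (V : Type) (adj : V -> V -> Prop) :
  (forall x y, adj x y -> adj y x) -> (forall x, ~ adj x x) ->
  forall v L w, walk V adj w L -> (forall k, k <= L -> w k <> v) ->
  adj v (w 0) -> adj v (w L) -> w 0 <> w L ->
  exists x n, is_cycle V adj x n /\ x 0 = v.
Proof.
  intros Hsym Hirr v L. induction L as [L IH] using lt_wf_ind.
  intros w Hw Hav H0 HL Hne.
  destruct (classic (exists L' w', L' < L /\ walk V adj w' L' /\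
     (forall k, k <= L' -> w' k <> v) /\ adj v (w' 0) /\ adj v (w' L') /\ w' 0 <> w' L'))
    as [[L' [w' [Hlt [Hw' [Ha' [H0' [HL' Hne']]]]]]] | Hmin].
  { eapply IH; eauto. }
  assert (Hmin' : forall L' w', L' < L -> walk V adj w' L' ->
     (forall k, k <= L' -> w' k <> v) -> adj v (w' 0) -> adj v (w' L') -> w' 0 <> w' L' -> False).
  { intros; apply Hmin; exists L', w'; tauto. }
  clear Hmin IH.
  assert (Hinj : forall i j, i <= L -> j <= L -> w i = w j -> i = j).
  { assert (forall i j, i < j -> j <= L -> w i = w j -> False).
    { intros i j Hij HjL Heq.
      apply (Hmin' (L - (j - i)) (splice V w i (j - i))).
      - lia.
      - apply splice_walk; auto; try lia. intros. replace (i + 1 + (j - i)) with (S j) by lia.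
        rewrite Heq. apply Hw; lia.
      - intros k Hk. destruct (splice_range V w i (j-i) k) as [k' [Hk' ->]]. apply Hav; lia.
      - rewrite splice_0; auto.
      - rewrite splice_eq_end; auto; [|lia]. replace (i + (j - i)) with j by lia; auto.
      - rewrite splice_0, splice_eq_end; auto; [|lia]. replace (i + (j - i)) with j by lia; auto. }
    intros i j Hi Hj Heq. destruct (Nat.lt_total i j) as [Hl|[Hl|Hl]]; auto.
    - exfalso; eauto.
    - exfalso; eapply (H j i); eauto. }
  assert (Hchord : forall i j, i + 1 < j -> j <= L -> ~ adj (w i) (w j)).
  { intros i j Hij HjL Ha.
    apply (Hmin' (L - (j - i - 1)) (splice V w i (j - i - 1))).
    - lia.
    - apply splice_walk; auto; try lia. intros. replace (i + 1 + (j - i - 1)) with j by lia. auto.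
    - intros k Hk. destruct (splice_range V w i (j-i-1) k) as [k' [Hk' ->]]. apply Hav; lia.
    - rewrite splice_0; auto.
    - rewrite splice_adj_end; auto; lia.
    - rewrite splice_0, splice_adj_end; auto; lia. }
  assert (Hnbr : forall k, 0 < k < L -> ~ adj v (w k)).
  { intros k Hk Ha. apply (Hmin' k w).
    - lia.
    - intros j Hj; apply Hw; lia.
    - intros j Hj; apply Hav; lia.
    - exact H0.
    - exact Ha.
    - intro E. apply Hinj in E; lia. }
  assert (HL1 : 1 <= L).
  { destruct L; [exfalso; auto|lia]. }
  set (x := fun k => match k with 0 => v | S k' => if k' <=? L then w k' else v end).
  assert (xin : forall k, k <= L -> x (S k) = w k).
  { intros k Hk; simpl. destruct (Nat.leb_spec k L); [reflexivity|lia]. }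
  assert (xout : x (S (S L)) = v).
  { unfold x; cbv beta iota. destruct (Nat.leb_spec (S L) L); [lia|reflexivity]. }
  exists x, (S (S L)). split; [|reflexivity].
  split; [lia|]. split; [rewrite xout; reflexivity|]. split; [|split].
  - intros i Hi. destruct i as [|k].
    + rewrite xin by lia. exact H0.
    + rewrite xin by lia. destruct (Nat.eq_dec k L) as [->|Hk].
      * rewrite xout. apply Hsym; auto.
      * rewrite xin by lia. apply Hw; lia.
  - intros i j Hi Hj Heq. destruct i as [|k]; destruct j as [|l]; auto.
    + rewrite xin in Heq by lia. exfalso; apply (Hav l); [lia|auto].
    + rewrite xin in Heq by lia. exfalso; apply (Hav k); [lia|auto].
    + rewrite !xin in Heq by lia. f_equal. apply Hinj; auto; lia.
  - intros i j Hi Hj Ha. destruct i as [|k]; destruct j as [|l].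
    + exfalso; apply (Hirr v); auto.
    + rewrite xin in Ha by lia. simpl x in Ha.
      destruct (Nat.eq_dec l 0) as [->|Hl0].
      * right; right. rewrite Nat.mod_small; lia.
      * destruct (Nat.eq_dec l L) as [->|HlL].
        -- right; left. replace (0 + S (S L) - S L) with 1 by lia. rewrite Nat.mod_small; lia.
        -- exfalso; apply (Hnbr l); auto; lia.
    + rewrite xin in Ha by lia. simpl x in Ha. apply Hsym in Ha.
      replace (S k + S (S L) - 0) with (S k + 1 * S (S L)) by lia.
      rewrite Nat.Div0.mod_add. rewrite Nat.mod_small by lia.
      destruct (Nat.eq_dec k 0) as [->|Hk0]; [right; left; reflexivity|].
      destruct (Nat.eq_dec k L) as [->|HkL]; [right; right; lia|].
      exfalso; apply (Hnbr k); auto; lia.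
    + rewrite !xin in Ha by lia.
      destruct (Nat.lt_total k l) as [Hl|[Hl|Hl]].
      * destruct (Nat.eq_dec l (S k)) as [->|Hne2].
        -- right; right. rewrite Nat.mod_small; lia.
        -- exfalso; apply (Hchord k l); auto; lia.
      * subst k. exfalso; apply (Hirr (w l)); auto.
      * destruct (Nat.eq_dec k (S l)) as [->|Hne2].
        -- right; left. replace (S (S l) + S (S L) - S l) with (1 + 1 * S (S L)) by lia.
           rewrite Nat.Div0.mod_add. rewrite Nat.mod_small; lia.
        -- exfalso; apply (Hchord l k); auto; lia.
Qed.

Lemma crt_walk V R a b : clos_refl_trans V R a b ->
  exists w L, w 0 = a /\ w L = b /\ walk V R w L.
Proof.
  intros H. apply clos_rt_rt1n in H. induction H as [x|x y z H Hyz IH].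
  - exists (fun _ => x), 0. repeat split. intros k Hk; lia.
  - destruct IH as [w [L [H0 [HL Hw]]]].
    exists (fun k => match k with 0 => x | S k => w k end), (S L).
    split; [reflexivity|]. split; [exact HL|].
    intros k Hk. destruct k as [|k].
    + rewrite H0; exact H.
    + apply Hw; lia.
Qed.

Lemma walk_crt V R w : forall j i, i <= j ->
  (forall k, i <= k -> k < j -> R (w k) (w (S k))) -> clos_refl_trans V R (w i) (w j).
Proof.
  induction j as [|j IH]; intros i Hi H.
  - assert (i = 0) by lia. subst. apply rt_refl.
  - destruct (Nat.eq_dec i (S j)) as [->|Hne]; [apply rt_refl|].
    apply rt_trans with (w j).
    + apply IH; [lia|]. intros; apply H; lia.
    + apply rt_step. apply H; lia.
Qed.

Lemma crt_sym V R : (forall x y, R x y -> R y x) ->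
  forall a b, clos_refl_trans V R a b -> clos_refl_trans V R b a.
Proof.
  intros Hs a b H. induction H.
  - apply rt_step; auto.
  - apply rt_refl.
  - eapply rt_trans; eauto.
Qed.

Lemma crt_mono V (R R' : V -> V -> Prop) : (forall x y, R x y -> R' x y) ->
  forall a b, clos_refl_trans V R a b -> clos_refl_trans V R' a b.
Proof.
  intros Hs a b H. induction H.
  - apply rt_step; auto.
  - apply rt_refl.
  - eapply rt_trans; eauto.
Qed.

Lemma min_walk V R a b : forall L w, w 0 = a -> w L = b -> walk V R w L ->
  exists w L, w 0 = a /\ w L = b /\ walk V R w L /\
    forall L' w', L' < L -> walk V R w' L' -> w' 0 = a -> w' L' = b -> False.
Proof.
  intros L. induction L as [L IH] using lt_wf_ind. intros w H0 HL Hw.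
  destruct (classic (exists L' w', L' < L /\ walk V R w' L' /\ w' 0 = a /\ w' L' = b))
    as [[L' [w' [? [? [? ?]]]]]|Hn].
  - eapply IH; eauto.
  - exists w, L. repeat split; auto. intros L' w' ? ? ? ?. apply Hn. exists L', w'; tauto.
Qed.

Lemma core_walk (V : Type) (adj : V -> V -> Prop) :
  (forall x y, adj x y -> adj y x) -> (forall x, ~ adj x x) ->
  forall J, pre_cycle_core V adj J ->
  forall a b p m, p 0 = a -> p m = b -> walk V adj p m -> J a -> J b ->
  (forall L' w', L' < m -> walk V adj w' L' -> w' 0 = a -> w' L' = b -> False) ->
  forall t, t <= m -> J (p t).
Proof.
  intros Hsym Hirr J [Jconn Jcyc] a b p m H0 Hm Hp Ja Jb Hmin t Ht.
  destruct (classic (J (p t))) as [|HnJ]; auto. exfalso.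
  assert (Hinj : forall i j, i < j -> j <= m -> p i = p j -> False).
  { intros i j Hij Hj Heq.
    apply (Hmin (m - (j - i)) (splice V p i (j - i))).
    - lia.
    - apply splice_walk; auto; try lia. intros. replace (i + 1 + (j - i)) with (S j) by lia.
      rewrite Heq. apply Hp; lia.
    - rewrite splice_0; auto.
    - rewrite splice_eq_end; auto; [|lia]. replace (i + (j - i)) with j by lia; auto. }
  assert (Ht0 : t <> 0) by (intro; subst; auto).
  assert (Htm : t <> m) by (intro; subst; auto).
  set (v := p t) in *.
  set (Ev := fun u w => adj u w /\ u <> v /\ w <> v).
  assert (EvS : forall x y, Ev x y -> Ev y x).
  { unfold Ev; intros x y [? [? ?]]; auto. }
  assert (c1 : clos_refl_trans V Ev (p (t-1)) a).
  { apply crt_sym; auto. rewrite <- H0. apply walk_crt; [lia|].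
    intros k _ Hk. split; [apply Hp; lia|]. unfold v; split; intro E; eapply Hinj; [| |exact E| | | exact E]; lia. }
  assert (c2 : clos_refl_trans V Ev a b).
  { eapply crt_mono; [|apply Jconn; auto].
    intros x y [Jx [Jy Axy]]. split; auto. split; intro E; subst; auto. }
  assert (c3 : clos_refl_trans V Ev b (p (t+1))).
  { apply crt_sym; auto. rewrite <- Hm. apply walk_crt; [lia|].
    intros k Hk1 Hk. split; [apply Hp; lia|]. unfold v; split; intro E;
    [eapply (Hinj t k) | eapply (Hinj t (S k))]; auto; lia. }
  assert (c : clos_refl_trans V Ev (p (t-1)) (p (t+1))).
  { eapply rt_trans; [exact c1|]. eapply rt_trans; eauto. }
  destruct (crt_walk V Ev _ _ c) as [w [L [W0 [WL Hw]]]].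
  assert (Hne : w 0 <> w L).
  { rewrite W0, WL. intro E. eapply Hinj; [| |exact E]; lia. }
  destruct (good_cycle V adj Hsym Hirr v L w) as [x [n [Hc Hx0]]].
  - intros k Hk. apply Hw; auto.
  - intros k Hk. destruct (Nat.eq_dec k L) as [->|HkL].
    + destruct L as [|L]; [exfalso; auto|]. apply (Hw L); lia.
    + apply (Hw k); lia.
  - rewrite W0. apply Hsym. replace t with (S (t - 1)) at 2 by lia. unfold v.
    replace (p t) with (p (S (t-1))) by (f_equal; lia). apply Hp; lia.
  - rewrite WL. unfold v. replace (t + 1) with (S t) by lia. apply Hp; lia.
  - exact Hne.
  - apply HnJ. fold v. rewrite <- Hx0. apply (Jcyc x n Hc 0). lia.
Qed.

Theorem lemma2p4 (V : Type) (adj : V -> V -> Prop) :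
  simple_graph V adj -> connected V adj -> has_cycle V adj ->
  (forall (K : Type) (F : K -> V -> Prop),
     (forall k, pre_cycle_core V adj (F k)) ->
     pre_cycle_core V adj (fun v => forall k, F k v)) /\
  (exists I : V -> Prop, minimal_pre_cycle_core V adj I /\
     forall J : V -> Prop, minimal_pre_cycle_core V adj J -> forall v, J v <-> I v).
Proof.
  intros [Hsym Hirr] Hconn _.
  assert (P1 : forall (K : Type) (F : K -> V -> Prop),
     (forall k, pre_cycle_core V adj (F k)) ->
     pre_cycle_core V adj (fun v => forall k, F k v)).
  { intros K F HF. split.
    - intros a b Ha Hb.
      destruct (crt_walk V _ a b (Hconn a b I I)) as [w [L [W0 [WL Hw]]]].
      destruct (min_walk V adj a b L w W0 WL) as [p [m [P0 [Pm [Hp Hmin]]]]].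
      { intros k Hk. apply Hw; auto. }
      assert (Hall : forall t, t <= m -> forall k, F k (p t)).
      { intros t Ht k. eapply (core_walk V adj Hsym Hirr (F k) (HF k) a b p m); eauto. }
      rewrite <- P0, <- Pm. apply walk_crt; [lia|].
      intros k _ Hk. split; [apply Hall; lia|]. split; [apply Hall; lia|]. apply Hp; auto.
    - intros x n Hc i Hi k. apply (proj2 (HF k) x n Hc i Hi). }
  split; [exact P1|].
  set (Ic := fun v => forall J : {J : V -> Prop | pre_cycle_core V adj J}, proj1_sig J v).
  assert (Icore : pre_cycle_core V adj Ic).
  { apply (P1 _ (fun J => proj1_sig J)). intros J; exact (proj2_sig J). }
  exists Ic. split.
  - split; auto. intros J HJ Hsub v Iv. exact (Iv (exist _ J HJ)).
  - intros J [HJ HJmin] v. split.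
    + intros Jv. apply (HJmin Ic Icore); auto.
      intros u Iu. exact (Iu (exist _ J HJ)).
    + intros Iv. exact (Iv (exist _ J HJ)).
Qed.
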